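(* For all probability measures $P,Q$ and all $\gamma\in[1,\infty)$, $$E_\gamma(P\|Q)\le\tfrac12\Bigl[1-\gamma+\sqrt{(\gamma-1)^2+\frac{4\gamma\,\chi^2(P\|Q)}{1+\gamma+\chi^2(P\|Q)}}\,\Bigr],$$ $$E_\gamma(P\|Q)\le\tfrac12\Bigl[1-\gamma+\sqrt{(\gamma-1)^2+4\gamma\bigl(1-e^{-D(P\|Q)}\bigr)}\,\Bigr],$$ where $D(P\|Q)$ is measured in nats. In particular ($\gamma=1$), $|P-Q|\le 2\sqrt{1-e^{-D(P\|Q)}}$.
   Context: For densities $p,q$ w.r.t. a dominating measure $\mu$: $E_\gamma(P\|Q):=\int(p-\gamma q)^+\,\mathrm{d}\mu$; $|P-Q|:=\int|p-q|\,\mathrm{d}\mu=2E_1(P\|Q)$; $\chi^2(P\|Q):=\int\frac{(p-q)^2}{q}\,\mathrm{d}\mu$ (equal to $+\infty$ if $P\not\ll Q$); $D(P\|Q):=\int p\ln\frac pq\,\mathrm{d}\mu$ (relative entropy in nats, $+\infty$ if $P\not\ll Q$). *)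

(* Defs.v *)
From HB Require Import structures.
From mathcomp Require Import all_boot all_order all_algebra.
From mathcomp Require Import all_classical all_reals all_analysis.
Set Implicit Arguments. Unset Strict Implicit. Unset Printing Implicit Defensive.
Import Order.TTheory GRing.Theory Num.Theory.
Local Open Scope ring_scope.
Local Open Scope ereal_scope.

Section fdiv.
Context d (T : measurableType d) (R : realType) (mu : {measure set T -> \bar R}).

Definition is_density (p : T -> R) : Prop :=
  measurable_fun setT p /\ (forall x, (0 <= p x)%R) /\
  \int[mu]_x (p x)%:E = 1.

Definition Egamma (p q : T -> R) (g : R) : \bar R :=
  \int[mu]_x (Num.max 0 (p x - g * q x))%:E.

Definition TVnorm (p q : T -> R) : \bar R :=
  \int[mu]_x `|p x - q x|%:E.

(* chi^2(P||Q) = int (p-q)^2/q dmu, with (a^2/0) = +oo for a <> 0 and 0/0 = 0;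
   this equals +oo when P is not << Q *)
Definition chi2 (p q : T -> R) : \bar R :=
  \int[mu]_x (if q x == 0%R then (if p x == 0%R then 0 else +oo)
              else ((p x - q x) ^+ 2 / q x)%:E).

(* D(P||Q) = int p ln(p/q) dmu (nats), with 0 ln(0/q) = 0 and p ln(p/0) = +oo
   for p > 0; this equals +oo when P is not << Q *)
Definition KL (p q : T -> R) : \bar R :=
  \int[mu]_x (if p x == 0%R then 0
              else if q x == 0%R then +oo
              else (p x * ln (p x / q x))%:E).
End fdiv.

(* c / (1 + gamma + c), extended by its limit 1 at c = +oo *)
Definition chi2_ratio (R : realType) (g : R) (c : \bar R) : R :=
  match c with
  | +oo%E => 1%R
  | _ => (fine c / (1 + g + fine c))%R
  end.

(* Main.v *)
Require Import Defs.
From mathcomp Require Import all_boot all_order all_algebra.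
From mathcomp Require Import all_classical all_reals all_analysis.
From mathcomp Require Import ring lra measurable_realfun.
Import Order.TTheory GRing.Theory Num.Theory.
Local Open Scope ring_scope.


Section reals.
Variable R : realType.

Lemma quad_bound (E g x : R) : 0 <= E -> 1 <= g ->
  E * E + (g - 1) * E <= g * x ->
  E <= (1 - g + Num.sqrt ((g - 1) ^+ 2 + 4 * g * x)) / 2.
Proof.
move=> E0 g1 h.
have h2 : 2 * E + g - 1 <= Num.sqrt ((g - 1) ^+ 2 + 4 * g * x).
  have -> : 2 * E + g - 1 = Num.sqrt ((2 * E + g - 1) ^+ 2).
    by rewrite sqrtr_sqr ger0_norm //; lra.
  apply: ler_wsqrtr; nra.
lra.
Qed.

Lemma expR_conv (t x y : R) : 0 <= t <= 1 ->
  expR (t * x + (1 - t) * y) <= t * expR x + (1 - t) * expR y.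
Proof.
move=> /andP[t0 t1].
set m := t * x + (1 - t) * y.
have hx : expR m * (1 + (x - m)) <= expR x.
  have -> : expR x = expR m * expR (x - m) by rewrite -expRD addrC subrK.
  by rewrite ler_pM2l ?expR_gt0 // expR_ge1Dx.
have hy : expR m * (1 + (y - m)) <= expR y.
  have -> : expR y = expR m * expR (y - m) by rewrite -expRD addrC subrK.
  by rewrite ler_pM2l ?expR_gt0 // expR_ge1Dx.
have e : t * (expR m * (1 + (x - m))) + (1 - t) * (expR m * (1 + (y - m))) = expR m.
  by rewrite /m; ring.
rewrite -{1}e; apply: lerD; apply: ler_wpM2l => //; lra.
Qed.

Lemma gM_id (a b g : R) :
  g - ((a - g * b) * (a - g * b) + (g - 1) * (a - g * b)) =
  g * a * b + g * (1 - a) * (1 - b) + a * (1 - a) + g ^+ 2 * b * (1 - b).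
Proof. ring. Qed.

Lemma ln_le_sub1 (r : R) : 0 < r -> ln r <= r - 1.
Proof.
move=> r0; have := @le_ln1Dx R (r - 1); rewrite addrCA subrr addr0; apply; lra.
Qed.


Lemma KLbin (a b g : R) (K : \bar R) :
  1 <= g -> 0 <= a -> a <= 1 -> 0 <= b -> b <= 1 -> 0 <= a - g * b ->
  (forall u v : R,
     ((u * a + v * (1 - a) + 1 - expR u * b - expR v * (1 - b))%:E <= K)%E) ->
  (a - g * b) * (a - g * b) + (g - 1) * (a - g * b)
    <= g * (1 - fine (expeR (- K)%E)).
Proof.
move=> g1 a0 a1 b0 b1 E0 HK.
have gM := gM_id a b g.
case: K HK => [K| |] HK; last first.
- by have := HK 0 0; rewrite leeNy_eq.
- rewrite /= subr0 mulr1.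
  have Ele1 : a - g * b <= 1 by nra.
  nra.
rewrite /=.
suff : g * expR (- K) <= g - ((a - g * b) * (a - g * b) + (g - 1) * (a - g * b)).
  move=> h; have -> : g * (1 - expR (- K)) = g - g * expR (- K) by ring.
  lra.
rewrite gM.
have [Ez|Epos] : a - g * b = 0 \/ 0 < a - g * b.
  by move: E0; rewrite le_eqVlt => /orP[/eqP<-|->]; [left|right].
- have := HK 0 0; rewrite expR0 lee_fin => h0.
  have : expR (- K) <= 1 by rewrite expR_le1; lra.
  have -> : a = g * b by lra.
  move=> h1. have g0 : 0 <= g by lra.
  nra.
have [bz|bpos] : b = 0 \/ 0 < b.
  by move: b0; rewrite le_eqVlt => /orP[/eqP<-|->]; [left|right].
- have := HK ((K + 1) / a) 0.
  have apos : 0 < a by rewrite bz mulr0 subr0 in Epos.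
  rewrite bz mulr0 subr0 mul0r expR0 mulr0 lee_fin divfK; last by rewrite gt_eqF.
  lra.
have [az|alt1] : a = 1 \/ a < 1.
  by move: a1; rewrite le_eqVlt => /orP[/eqP->|->]; [left|right].
- have blt1 : b < 1 by nra.
  have hK : - ln b <= K.
    rewrite leNgt; apply/negP => hlt.
    set dl := - ln b - K.
    have dpos : 0 < dl by rewrite /dl; lra.
    have := HK (- ln b) (ln (dl / (2 * (1 - b)))).
    rewrite az expRN lnK // lnK; last first.
      by rewrite posrE divr_gt0 //; lra.
    rewrite lee_fin mulVf; last by rewrite gt_eqF.
    have -> : dl / (2 * (1 - b)) * (1 - b) = dl / 2.
      by field; apply/eqP; lra.
    rewrite /dl; lra.
  have : expR (- K) <= b.
    by rewrite -[leRHS](lnK (x:=b)) // ler_expR; lra.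
  rewrite az => h.
  have : 0 <= g ^+ 2 * b * (1 - b) by apply: mulr_ge0; [apply: mulr_ge0; [exact: sqr_ge0|lra]|lra].
  nra.
have blta : b < a by nra.
set a' := 1 - a in HK gM *.
set b' := 1 - b in HK gM *.
have a'pos : 0 < a' by rewrite /a'; lra.
have b'pos : 0 < b' by rewrite /b'; lra.
set sa := Num.sqrt a; set sb := Num.sqrt b.
set sa' := Num.sqrt a'; set sb' := Num.sqrt b'.
have ea : a = sa ^+ 2 by rewrite sqr_sqrtr.
have eb : b = sb ^+ 2 by rewrite sqr_sqrtr.
have ea' : a' = sa' ^+ 2 by rewrite sqr_sqrtr //; lra.
have eb' : b' = sb' ^+ 2 by rewrite sqr_sqrtr //; lra.
have sapos : 0 < sa by rewrite sqrtr_gt0; lra.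
have sbpos : 0 < sb by rewrite sqrtr_gt0.
have sa'pos : 0 < sa' by rewrite sqrtr_gt0.
have sb'pos : 0 < sb' by rewrite sqrtr_gt0.
set BC := sa * sb + sa' * sb'.
have BCpos : 0 < BC by rewrite /BC; apply: addr_gt0; apply: mulr_gt0.
set X := sa / (sb * BC); set Y := sa' / (sb' * BC).
have Xpos : 0 < X by rewrite /X divr_gt0 // mulr_gt0.
have Ypos : 0 < Y by rewrite /Y divr_gt0 // mulr_gt0.
have XY1 : X * b + Y * b' = 1.
  rewrite eb eb' /X /Y /BC; field.
  by rewrite (gt_eqF BCpos) (gt_eqF sb'pos) (gt_eqF sbpos).
have := HK (ln X) (ln Y).
rewrite !lnK // lee_fin => hK.
have h1 : expR (- K) <= expR (a * (- ln X) + (1 - a) * (- ln Y)).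
  rewrite ler_expR -/a'; lra.
have h2 := expR_conv a (- ln X) (- ln Y).
rewrite !expRN !lnK // in h2.
have h3 : a * X^-1 + (1 - a) * Y^-1 = BC ^+ 2.
  rewrite -/a' {1}ea ea' /X /Y /BC; field.
  by rewrite (gt_eqF BCpos) (gt_eqF sb'pos) (gt_eqF sa'pos) (gt_eqF sbpos) (gt_eqF sapos).
have h4 : expR (- K) <= BC ^+ 2.
  rewrite -h3; apply: (le_trans h1); apply: h2; lra.
have g0 : 0 <= g by lra.
have h5 : g * expR (- K) <= g * BC ^+ 2 by apply: ler_wpM2l.
apply: (le_trans h5).
have sq := sqr_ge0 (sa * sa' - g * sb * sb').
rewrite ea eb ea' eb' /BC; nra.
Qed.


Lemma chi_poly (b e h : R) : 0 <= b -> 0 <= e -> 0 <= h ->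
  0 <= 1 - (1 + h) * b - e ->
  e * (e + h) * (2 + h) * (b * (1 - b)) <= (h * b + e) ^+ 2 * ((1 + h) - e * (e + h)).
Proof.
move=> b0 e0 h0 w0.
have [w hw] : exists w, w = 1 - (1 + h) * b - e by eexists.
have w0' : 0 <= w by rewrite hw.
have P0 : 0 <= e ^+ 2 * w ^+ 2 + e ^+ 2 * w ^+ 2 * h + 2%:R * e ^+ 3 * w + e ^+ 3 * w * h + b * e * w ^+ 2 * h ^+ 2 + 3%:R * b * e ^+ 2 * w * h + 2%:R * b * e ^+ 2 * w * h ^+ 2 + b ^+ 2 * w ^+ 2 * h ^+ 2 + b ^+ 2 * w ^+ 2 * h ^+ 3 + 2%:R * b ^+ 2 * e * w * h + 5%:R * b ^+ 2 * e * w * h ^+ 2 + 3%:R * b ^+ 2 * e * w * h ^+ 3 + b ^+ 2 * e ^+ 2 + 3%:R * b ^+ 2 * e ^+ 2 * h + 3%:R * b ^+ 2 * e ^+ 2 * h ^+ 2 + b ^+ 2 * e ^+ 2 * h ^+ 3 + 2%:R * b ^+ 3 * w * h ^+ 2 + 4%:R * b ^+ 3 * w * h ^+ 3 + 2%:R * b ^+ 3 * w * h ^+ 4 + 2%:R * b ^+ 3 * e * h + 6%:R * b ^+ 3 * e * h ^+ 2 + 6%:R * b ^+ 3 * e * h ^+ 3 + 2%:R * b ^+ 3 * e * h ^+ 4 + b ^+ 4 * h ^+ 2 + 3%:R * b ^+ 4 * h ^+ 3 + 3%:R * b ^+ 4 * h ^+ 4 + b ^+ 4 * h ^+ 5.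
  by repeat (apply: addr_ge0 || apply: mulr_ge0 || apply: exprn_ge0 || apply: ler0n || done).
rewrite -subr_ge0.
suff -> : (h * b + e) ^+ 2 * ((1 + h) - e * (e + h)) - e * (e + h) * (2 + h) * (b * (1 - b)) = e ^+ 2 * w ^+ 2 + e ^+ 2 * w ^+ 2 * h + 2%:R * e ^+ 3 * w + e ^+ 3 * w * h + b * e * w ^+ 2 * h ^+ 2 + 3%:R * b * e ^+ 2 * w * h + 2%:R * b * e ^+ 2 * w * h ^+ 2 + b ^+ 2 * w ^+ 2 * h ^+ 2 + b ^+ 2 * w ^+ 2 * h ^+ 3 + 2%:R * b ^+ 2 * e * w * h + 5%:R * b ^+ 2 * e * w * h ^+ 2 + 3%:R * b ^+ 2 * e * w * h ^+ 3 + b ^+ 2 * e ^+ 2 + 3%:R * b ^+ 2 * e ^+ 2 * h + 3%:R * b ^+ 2 * e ^+ 2 * h ^+ 2 + b ^+ 2 * e ^+ 2 * h ^+ 3 + 2%:R * b ^+ 3 * w * h ^+ 2 + 4%:R * b ^+ 3 * w * h ^+ 3 + 2%:R * b ^+ 3 * w * h ^+ 4 + 2%:R * b ^+ 3 * e * h + 6%:R * b ^+ 3 * e * h ^+ 2 + 6%:R * b ^+ 3 * e * h ^+ 3 + 2%:R * b ^+ 3 * e * h ^+ 4 + b ^+ 4 * h ^+ 2 + 3%:R * b ^+ 4 * h ^+ 3 + 3%:R * b ^+ 4 * h ^+ 4 + b ^+ 4 * h ^+ 5 by [].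
rewrite hw; ring.
Qed.


Lemma chibin (a b g : R) (C : \bar R) :
  1 <= g -> 0 <= a -> a <= 1 -> 0 <= b -> b <= 1 -> 0 <= a - g * b ->
  (forall al be : R,
     ((2 * (al - be) * (a - b) - al ^+ 2 * b - be ^+ 2 * (1 - b))%:E <= C)%E) ->
  (a - g * b) * (a - g * b) + (g - 1) * (a - g * b) <= g * chi2_ratio g C.
Proof.
move=> g1 a0 a1 b0 b1 E0 HC.
have gM := gM_id a b g.
case: C HC => [c| |] HC; last first.
- by have := HC 0 0; rewrite leeNy_eq.
- rewrite /= mulr1.
  have Ele1 : a - g * b <= 1 by nra.
  nra.
rewrite /chi2_ratio /=.
have c0 : 0 <= c.
  have := HC 0 0; rewrite lee_fin.
  have -> : 2 * (0 - 0) * (a - b) - 0 ^+ 2 * b - 0 ^+ 2 * (1 - b) = 0 :> R by ring.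
  by [].
have den : 0 < 1 + g + c by lra.
rewrite mulrA ler_pdivlMr //.
have [Ez|Epos] : a - g * b = 0 \/ 0 < a - g * b.
  by move: E0; rewrite le_eqVlt => /orP[/eqP<-|->]; [left|right].
  rewrite Ez; nra.
have [bz|bpos] : b = 0 \/ 0 < b.
  by move: b0; rewrite le_eqVlt => /orP[/eqP<-|->]; [left|right].
- have apos : 0 < a by rewrite bz mulr0 subr0 in Epos.
  have := HC ((c + 1) / (2 * a)) 0.
  rewrite bz lee_fin.
  have -> : 2 * ((c + 1) / (2 * a) - 0) * (a - 0) - ((c + 1) / (2 * a)) ^+ 2 * 0
     - 0 ^+ 2 * (1 - 0) = c + 1.
    by field; rewrite gt_eqF.
  lra.
have blt1 : b < 1 by nra.
have B0 : 0 < b * (1 - b) by apply: mulr_gt0; lra.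
have hc : (a - b) ^+ 2 <= c * (b * (1 - b)).
  have := HC ((a - b) / b) (- (a - b) / (1 - b)).
  rewrite lee_fin.
  have -> : 2 * ((a - b) / b - - (a - b) / (1 - b)) * (a - b) -
     ((a - b) / b) ^+ 2 * b - (- (a - b) / (1 - b)) ^+ 2 * (1 - b)
     = (a - b) ^+ 2 / (b * (1 - b)).
    by field; rewrite (gt_eqF bpos) andbT; apply/eqP; lra.
  by rewrite ler_pdivrMr.
have k1 : ((a - g * b) * (a - g * b) + (g - 1) * (a - g * b)) * (1 + g) * (b * (1 - b))
   <= (a - b) ^+ 2 * (g - ((a - g * b) * (a - g * b) + (g - 1) * (a - g * b))).
  have e1 : ((a - g * b) * (a - g * b) + (g - 1) * (a - g * b)) * (1 + g) * (b * (1 - b))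
     = (a - g * b) * ((a - g * b) + (g - 1)) * (2 + (g - 1)) * (b * (1 - b)) by ring.
  have e2 : (a - b) ^+ 2 * (g - ((a - g * b) * (a - g * b) + (g - 1) * (a - g * b)))
     = ((g - 1) * b + (a - g * b)) ^+ 2 * ((1 + (g - 1)) - (a - g * b) * ((a - g * b) + (g - 1))).
    by ring.
  rewrite e1 e2; apply: chi_poly => //; lra.
have gMpos : 0 <= g - ((a - g * b) * (a - g * b) + (g - 1) * (a - g * b)).
  rewrite gM.
  have : 0 <= g ^+ 2 * b * (1 - b) by apply: mulr_ge0; [apply: mulr_ge0; [exact: sqr_ge0|lra]|lra].
  have : 0 <= g * a * b by apply: mulr_ge0; [apply: mulr_ge0|]; lra.
  have : 0 <= g * (1 - a) * (1 - b) by apply: mulr_ge0; [apply: mulr_ge0|]; lra.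
  have : 0 <= a * (1 - a) by apply: mulr_ge0; lra.
  lra.
have k2 := ler_wpM2r gMpos hc.
have k3 := le_trans k1 k2.
have k4 : ((a - g * b) * (a - g * b) + (g - 1) * (a - g * b)) * (1 + g)
   <= c * (g - ((a - g * b) * (a - g * b) + (g - 1) * (a - g * b))).
  rewrite -(ler_pM2r B0); apply: (le_trans k3).
  by rewrite le_eqVlt; apply/orP; left; apply/eqP; ring.
nra.
Qed.

End reals.



Section integ.
Context d (T : measurableType d) (R : realType) (mu : {measure set T -> \bar R}).

Lemma nn_mono (f g : T -> \bar R) : (forall x, (0 <= f x)%E) ->
  (forall x, (f x <= g x)%E) -> (\int[mu]_x f x <= \int[mu]_x g x)%E.
Proof.
move=> f0 fg; have g0 x : (0 <= g x)%E := le_trans (f0 x) (fg x).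
rewrite !ge0_integralTE //; apply: ereal_sup_le => _ /= [h hf <-].
by exists h => // x; exact: le_trans (hf x) (fg x).
Qed.

Lemma int_lb (F : T -> \bar R) (h : T -> R) :
  (forall x, ((h x)%:E <= F x)%E) ->
  (\int[mu]_x (h x)%:E <= \int[mu]_x F x)%E.
Proof.
move=> hF; rewrite integralE [leRHS]integralE; apply: leeB.
- apply: nn_mono => x; first exact: funepos_ge0.
  exact: (@funepos_le _ _ setT (EFin \o h) F (fun y _ => hF y) x (in_setT x)).
- apply: nn_mono => x; first exact: funeneg_ge0.
  exact: (@funeneg_le _ _ setT (EFin \o h) F (fun y _ => hF y) x (in_setT x)).
Qed.

Lemma dens_int p : is_density mu p -> mu.-integrable setT (EFin \o p).
Proof.
case=> mp [p0 ip]; apply/integrableP; split; first exact/measurable_EFinP.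
rewrite (eq_integral (fun x => (p x)%:E)); first by rewrite ip ltry.
by move=> x _; rewrite /= ger0_norm.
Qed.

Lemma int_lin (D : set T) (f g : T -> R) k l : measurable D ->
  mu.-integrable D (EFin \o f) -> mu.-integrable D (EFin \o g) ->
  mu.-integrable D (EFin \o (fun x => k * f x + l * g x)).
Proof.
move=> mD iff ig.
have := integrableD mD (integrableZl mD k iff) (integrableZl mD l ig).
by apply: eq_integrable => // x _ /=; rewrite EFinD !EFinM.
Qed.

Lemma lin_int p q (A : set T) (c1 c2 c3 c4 : R) :
  is_density mu p -> is_density mu q -> measurable A ->
  (\int[mu]_x ((c1 * p x + c2 * q x
       + ((fun y => c3 * p y + c4 * q y) \_ A) x)%:E)
   = (c1 + c2 + c3 * (\int[mu]_(x in A) p x) + c4 * (\int[mu]_(x in A) q x))%:E)%E.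
Proof.
move=> Hp Hq mA.
have ip := dens_int _ Hp; have iq := dens_int _ Hq.
have ipA : mu.-integrable A (EFin \o p) by exact: integrableS ip.
have iqA : mu.-integrable A (EFin \o q) by exact: integrableS iq.
have igA := int_lin A p q c3 c4 mA ipA iqA.
have igP : mu.-integrable setT (EFin \o ((fun y => c3 * p y + c4 * q y) \_ A)).
  by rewrite -restrict_EFin; exact/(integrable_mkcond _ mA).1.
have i1 := int_lin setT p q c1 c2 measurableT ip iq.
have i2 : mu.-integrable setT (EFin \o (fun x => c1 * p x + c2 * q x
       + ((fun y => c3 * p y + c4 * q y) \_ A) x)).
  have := integrableD measurableT i1 igP.
  by apply: eq_integrable => // x _ /=; rewrite EFinD.
rewrite -[LHS](@fineK _ (\int[mu]_x _)%E); last exact: integrable_fin_num.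
congr EFin.
rewrite -/(Rintegral mu setT _).
rewrite (RintegralD measurableT i1 igP).
rewrite -Rintegral_mkcond.
rewrite (RintegralD mA (integrableZl mA c3 ipA) (integrableZl mA c4 iqA)).
rewrite (RintegralD measurableT (integrableZl measurableT c1 ip) (integrableZl measurableT c2 iq)).
rewrite (RintegralZl _ mA ipA) (RintegralZl _ mA iqA) (RintegralZl _ measurableT ip) (RintegralZl _ measurableT iq).
have hp1 : \int[mu]_x p x = 1 by rewrite /Rintegral (proj2 (proj2 Hp)).
have hq1 : \int[mu]_x q x = 1 by rewrite /Rintegral (proj2 (proj2 Hq)).
rewrite hp1 hq1; ring.
Qed.


Lemma KLpt (pp qq f : R) : 0 <= pp -> 0 <= qq ->
  (((f + 1) * pp - expR f * qq)%:E <=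
    (if pp == 0%R then 0 else if qq == 0%R then +oo else (pp * ln (pp / qq))%:E))%E.
Proof.
move=> p0 q0; have [->|pn] := eqVneq pp 0.
  rewrite lee_fin mulr0 sub0r oppr_le0; apply: mulr_ge0 => //; exact: expR_ge0.
have [->|qn] := eqVneq qq 0; first exact: leey.
rewrite lee_fin.
have ppos : 0 < pp by rewrite lt0r pn.
have qpos : 0 < qq by rewrite lt0r qn.
set r := expR f * qq / pp.
have rpos : 0 < r by rewrite divr_gt0 // mulr_gt0 // expR_gt0.
have hr := @ln_le_sub1 R r rpos.
have lr : ln r = f + ln qq - ln pp.
  rewrite /r ln_div ?lnM ?expRK // ?posrE ?mulr_gt0 ?expR_gt0 //.
rewrite lr in hr.
have h1 := ler_wpM2l (ltW ppos) hr.
have h2 : pp * r = expR f * qq by rewrite /r mulrC divfK // gt_eqF.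
rewrite ln_div ?posrE //.
nra.
Qed.

Lemma chipt (pp qq t : R) : 0 <= pp -> 0 <= qq ->
  ((2 * t * (pp - qq) - t ^+ 2 * qq)%:E <=
    (if qq == 0%R then (if pp == 0%R then 0 else +oo) else ((pp - qq) ^+ 2 / qq)%:E))%E.
Proof.
move=> p0 q0; have [->|qn] := eqVneq qq 0.
  have [->|pn] := eqVneq pp 0; last exact: leey.
  by rewrite lee_fin subrr !mulr0 subr0.
have qpos : 0 < qq by rewrite lt0r qn.
rewrite lee_fin ler_pdivlMr //.
have := sqr_ge0 (pp - qq - t * qq); nra.
Qed.

Definition Aset (p q : T -> R) (g : R) : set T := [set x | g * q x < p x]%classic.

Lemma mAset p q g : is_density mu p -> is_density mu q -> measurable (Aset p q g).
Proof.
move=> [mp _] [mq _].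
have mf : measurable_fun setT (fun x => p x - g * q x).
  by apply: measurable_funB => //; apply: measurable_funM.
have := mf measurableT `]0%R, +oo[%classic (measurable_itv _).
rewrite setTI; congr measurable; apply/seteqP; split => x /=;
  by rewrite in_itv /= andbT subr_gt0.
Qed.


Lemma patchA (p q : T -> R) (g c3 c4 : R) (x : T) :
  ((fun y => c3 * p y + c4 * q y) \_ (Aset p q g)) x =
  if g * q x < p x then c3 * p x + c4 * q x else 0.
Proof.
rewrite patchE; case: ifPn => [/set_mem -> //| h].
case: ifP => // hx; exfalso; move/negP: h; apply; exact: mem_set.
Qed.

Lemma eqle (x y : R) : x = y -> x <= y.
Proof. by move=> ->. Qed.

Section dens.
Variables (p q : T -> R) (Hp : is_density mu p) (Hq : is_density mu q) (g : R).
Let mA := mAset p q g Hp Hq.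
Let p0 x : 0 <= p x := (proj1 (proj2 Hp)) x.
Let q0 x : 0 <= q x := (proj1 (proj2 Hq)) x.
Let a := \int[mu]_(x in Aset p q g) p x.
Let b := \int[mu]_(x in Aset p q g) q x.

Lemma lin_ge0 (c1 c2 c3 c4 : R) :
  (forall x, 0 <= c1 * p x + c2 * q x +
     (if g * q x < p x then c3 * p x + c4 * q x else 0)) ->
  0 <= c1 + c2 + c3 * a + c4 * b.
Proof.
move=> H; rewrite -lee_fin -(lin_int p q (Aset p q g) c1 c2 c3 c4 Hp Hq mA).
by apply: integral_ge0 => x _; rewrite lee_fin patchA.
Qed.

Lemma ab_bounds : [/\ 0 <= a, a <= 1, 0 <= b & b <= 1].
Proof.
have pt (c1 c2 c3 c4 : R) : (forall x, 0 <= c1 * p x + c2 * q x +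
     (if g * q x < p x then c3 * p x + c4 * q x else 0)) -> 0 <= c1 + c2 + c3 * a + c4 * b.
  exact: lin_ge0.
have h1 := @pt 0 0 1 0 (fun x => ltac:(have := p0 x; have := q0 x; case: ifP => _; lra)).
have h2 := @pt 1 0 (-1) 0 (fun x => ltac:(have := p0 x; have := q0 x; case: ifP => _; lra)).
have h3 := @pt 0 0 0 1 (fun x => ltac:(have := p0 x; have := q0 x; case: ifP => _; lra)).
have h4 := @pt 0 1 0 (-1) (fun x => ltac:(have := p0 x; have := q0 x; case: ifP => _; lra)).
split; lra.
Qed.

Lemma E_ge0 : 0 <= a - g * b.
Proof.
have := @lin_ge0 0 0 1 (- g) (fun x => ltac:(have := p0 x; have := q0 x; case: ifP => h; lra)).
lra.
Qed.

Lemma Eg_eq : Egamma mu p q g = (a - g * b)%:E.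
Proof.
rewrite /Egamma (eq_integral (fun x => ((0 * p x + 0 * q x +
   ((fun y => 1 * p y + - g * q y) \_ (Aset p q g)) x)%:E))).
  by rewrite (lin_int p q (Aset p q g) 0 0 1 (- g) Hp Hq mA) /a /b; congr EFin; ring.
move=> x _; rewrite patchA; case: ifPn => h; congr EFin.
  by rewrite max_r; [ring | lra].
by rewrite max_l; [ring | rewrite -leNgt in h; lra].
Qed.

Lemma KL_lb u v :
  ((u * a + v * (1 - a) + 1 - expR u * b - expR v * (1 - b))%:E <= KL mu p q)%E.
Proof.
have e := lin_int p q (Aset p q g) (v + 1) (- expR v) (u - v) (- (expR u - expR v)) Hp Hq mA.
rewrite /KL.
apply: (le_trans _ (int_lb (fun x => if p x == 0%R then 0%E else if q x == 0%R then +oo%E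
    else (p x * ln (p x / q x))%:E)
  (fun x => (v + 1) * p x + (- expR v) * q x +
     ((fun y => (u - v) * p y + (- (expR u - expR v)) * q y) \_ (Aset p q g)) x) _)).
  by rewrite e lee_fin /a /b; apply: eqle; ring.
move=> x; rewrite patchA; case: ifPn => _.
  by apply: le_trans (KLpt (p x) (q x) u (p0 x) (q0 x)); rewrite lee_fin; apply: eqle; ring.
by apply: le_trans (KLpt (p x) (q x) v (p0 x) (q0 x)); rewrite lee_fin; apply: eqle; ring.
Qed.

Lemma chi_lb al be :
  ((2 * (al - be) * (a - b) - al ^+ 2 * b - be ^+ 2 * (1 - b))%:E <= chi2 mu p q)%E.
Proof.
have e := lin_int p q (Aset p q g) (2 * be) (- 2 * be - be ^+ 2) (2 * (al - be))
   (- 2 * (al - be) - (al ^+ 2 - be ^+ 2)) Hp Hq mA.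
rewrite /chi2.
apply: (le_trans _ (int_lb (fun x => if q x == 0%R then (if p x == 0%R then 0%E else +oo%E)
    else ((p x - q x) ^+ 2 / q x)%:E)
  (fun x => (2 * be) * p x + (- 2 * be - be ^+ 2) * q x +
     ((fun y => (2 * (al - be)) * p y + (- 2 * (al - be) - (al ^+ 2 - be ^+ 2)) * q y)
       \_ (Aset p q g)) x) _)).
  by rewrite e lee_fin /a /b; apply: eqle; ring.
move=> x; rewrite patchA; case: ifPn => _.
  by apply: le_trans (chipt (p x) (q x) al (p0 x) (q0 x)); rewrite lee_fin; apply: eqle; ring.
by apply: le_trans (chipt (p x) (q x) be (p0 x) (q0 x)); rewrite lee_fin; apply: eqle; ring.
Qed.

Lemma TV_eq : g = 1 -> TVnorm mu p q = (2 * (a - b))%:E.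
Proof.
move=> g1.
rewrite /TVnorm (eq_integral (fun x => (((-1) * p x + 1 * q x +
   ((fun y => 2 * p y + - 2 * q y) \_ (Aset p q g)) x)%:E))).
  by rewrite (lin_int p q (Aset p q g) (-1) 1 2 (- 2) Hp Hq mA) /a /b; congr EFin; ring.
move=> x _; rewrite patchA; case: ifPn => h; congr EFin; rewrite g1 mul1r in h.
  by rewrite ger0_norm; [ring | lra].
by rewrite ler0_norm; [ring | rewrite -leNgt in h; lra].
Qed.

End dens.

End integ.



Theorem corollary3 (d : measure_display) (T : measurableType d) (R : realType)
  (mu : {measure set T -> \bar R}) (p q : T -> R) :
  is_density mu p -> is_density mu q ->
  (forall g : R, 1 <= g ->
     (Egamma mu p q g <=
       ((1 - g + Num.sqrt ((g - 1) ^+ 2 + 4 * g * chi2_ratio g (chi2 mu p q))) / 2)%:E)%E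
     /\
     (Egamma mu p q g <=
       ((1 - g + Num.sqrt ((g - 1) ^+ 2
            + 4 * g * (1 - fine (expeR (- KL mu p q)%E)))) / 2)%:E)%E)
  /\
  (TVnorm mu p q <= (2 * Num.sqrt (1 - fine (expeR (- KL mu p q)%E)))%:E)%E.
Proof.
move=> Hp Hq.
have main g : 1 <= g ->
   [/\ Egamma mu p q g = (\int[mu]_(x in Aset d T R p q g) p x -
        g * \int[mu]_(x in Aset d T R p q g) q x)%:E,
    0 <= \int[mu]_(x in Aset d T R p q g) p x - g * \int[mu]_(x in Aset d T R p q g) q x,
    let E := \int[mu]_(x in Aset d T R p q g) p x - g * \int[mu]_(x in Aset d T R p q g) q x in
      E * E + (g - 1) * E <= g * chi2_ratio g (chi2 mu p q) &
    let E := \int[mu]_(x in Aset d T R p q g) p x - g * \int[mu]_(x in Aset d T R p q g) q x in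
      E * E + (g - 1) * E <= g * (1 - fine (expeR (- KL mu p q)%E))].
  move=> g1.
  have [a0 a1 b0 b1] := ab_bounds _ _ _ _ _ _ Hp Hq g.
  have E0 := E_ge0 _ _ _ _ _ _ Hp Hq g.
  split => //.
  - exact: (Eg_eq _ _ _ _ _ _ Hp Hq g).
  - exact: (chibin _ _ _ _ _ g1 a0 a1 b0 b1 E0 (chi_lb _ _ _ _ _ _ Hp Hq g)).
  - exact: (KLbin _ _ _ _ _ g1 a0 a1 b0 b1 E0 (KL_lb _ _ _ _ _ _ Hp Hq g)).
split.
  move=> g g1; have [-> E0 h1 h2] := main g g1.
  by split; rewrite lee_fin; apply: quad_bound.
have [_ E0 _ h2] := main 1 (lexx _).
rewrite (TV_eq _ _ _ _ _ _ Hp Hq 1 (erefl 1)) lee_fin.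
move: E0 h2; set E := (_ - 1 * _) => E0 h2.
have -> : \int[mu]_(x in Aset d T R p q 1) p x - \int[mu]_(x in Aset d T R p q 1) q x = E.
  by rewrite /E mul1r.
rewrite ler_pM2l ?ltr0n //.
rewrite -(ger0_norm E0) -sqrtr_sqr; apply: ler_wsqrtr.
move: h2 => /= h2; rewrite expr2; lra.
Qed.
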